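(* Let $1\le m\le n$, $\boldsymbol{\theta}^*\in\mathbb{R}^{m+n-1}$ and $X\sim\mathbb{P}_{\boldsymbol{\theta}^*}$. Let $V$ be the Fisher information matrix and $S$ the matrix defined below, both evaluated at $\boldsymbol{\theta}^*$, let $R=V^{-1}-S$ and $U=\mathrm{Cov}[R\{\mathbf{g}-\mathbb{E}\mathbf{g}\}]$. Then \[ \|U\|\le\|V^{-1}-S\|+\frac{3(1+e^{2\|\boldsymbol{\theta}^*\|_\infty})^4}{4mn\,e^{4\|\boldsymbol{\theta}^*\|_\infty}}, \] where $\|A\|:=\max_{i,j}|a_{i,j}|$.
   Context: Affiliation network model: $X=(x_{i,j})$ is an $m\times n$ $\{0,1\}$-matrix; parameters $\alpha_1,\dots,\alpha_m,\beta_1,\dots,\beta_n$ with $\beta_n=0$, $\boldsymbol{\theta}=(\alpha_1,\dots,\alpha_m,\beta_1,\dots,\beta_{n-1})^\top$; under $\mathbb{P}_{\boldsymbol{\theta}}$ the $x_{i,j}$ are independent Bernoulli with success probability $e^{\alpha_i+\beta_j}/(1+e^{\alpha_i+\beta_j})$. $d_i=\sum_j x_{i,j}$, $b_j=\sum_i x_{i,j}$, $\mathbf{g}=(d_1,\dots,d_m,b_1,\dots,b_{n-1})^\top$. Write $u_{i,j}=e^{\alpha_i+\beta_j}/(1+e^{\alpha_i+\beta_j})^2$. The Fisher information $V=(v_{k,l})$ is the $(m+n-1)\times(m+n-1)$ symmetric matrix with $v_{i,i}=\sum_{j=1}^n u_{i,j}$ ($i\le m$), $v_{m+j,m+j}=\sum_{i=1}^m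 u_{i,j}$ ($j\le n-1$), $v_{i,m+j}=v_{m+j,i}=u_{i,j}$ ($i\le m$, $j\le n-1$), and all other entries zero; also set $v_{m+n,m+n}=\sum_{i=1}^m u_{i,n}$. $S=(s_{k,l})$: $s_{k,l}=\frac{\delta_{k,l}}{v_{k,k}}+\frac{1}{v_{m+n,m+n}}$ if $k,l\in\{1,\dots,m\}$ or $k,l\in\{m+1,\dots,m+n-1\}$, and $s_{k,l}=-\frac{1}{v_{m+n,m+n}}$ otherwise. *)

(* Defs.v *)
From HB Require Import structures.
From mathcomp Require Import all_boot all_order all_algebra.
From mathcomp Require Import reals exp sequences.
Set Implicit Arguments. Unset Strict Implicit. Unset Printing Implicit Defensive.
Import Order.TTheory GRing.Theory Num.Theory.
Local Open Scope ring_scope.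

Section Affiliation.
Variable R : realType.
Variables m n : nat.
(* theta = (alpha_1..alpha_m, beta_1..beta_{n-1}) ; dimension m + (n-1) *)
Variable theta : 'cV[R]_(m + n.-1).

(* theta_k for a 0-based nat index k (0 outside the range) *)
Definition thetaN (k : nat) : R :=
  if insub k is Some k' then theta k' 0 else 0.

Definition alphaN (i : nat) : R := thetaN i.
(* beta_j, j = 0..n-1 (0-based); beta_{n-1} = 0 (the paper's beta_n = 0) *)
Definition betaN (j : nat) : R := if (j < n.-1)%N then thetaN (m + j) else 0.

Definition pN (i j : nat) : R :=
  expR (alphaN i + betaN j) / (1 + expR (alphaN i + betaN j)).

Definition uN (i j : nat) : R :=
  expR (alphaN i + betaN j) / (1 + expR (alphaN i + betaN j)) ^+ 2.

(* Fisher information V : rows/cols k < m are alpha's, m + j are beta_j *)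
Definition fisherV : 'M[R]_(m + n.-1) :=
  \matrix_(k, l)
    match split k, split l with
    | inl i, inl i' => if i == i' then \sum_(j < n) uN i j else 0
    | inr j, inr j' => if j == j' then \sum_(i < m) uN i j else 0
    | inl i, inr j => uN i j
    | inr j, inl i => uN i j
    end.

Definition vlast : R := \sum_(i < m) uN i n.-1.

Definition matS : 'M[R]_(m + n.-1) :=
  \matrix_(k, l)
    match split k, split l with
    | inl i, inl i' => (i == i')%:R / fisherV k k + 1 / vlast
    | inr j, inr j' => (j == j')%:R / fisherV k k + 1 / vlast
    | _, _ => - (1 / vlast)
    end.

Definition probX (X : 'M[bool]_(m, n)) : R :=
  \prod_(i < m) \prod_(j < n) (if X i j then pN i j else 1 - pN i j).

Definition Exp (p q : nat) (F : 'M[bool]_(m, n) -> 'M[R]_(p, q)) : 'M[R]_(p, q) :=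
  \sum_(X : 'M[bool]_(m, n)) probX X *: F X.

Definition gvec (X : 'M[bool]_(m, n)) : 'cV[R]_(m + n.-1) :=
  \col_k match split k with
         | inl i => \sum_(j < n) (X i j)%:R
         | inr j => \sum_(i < m) (X i (widen_ord (leq_pred n) j))%:R
         end.

Definition Cov (p : nat) (Y : 'M[bool]_(m, n) -> 'cV[R]_p) : 'M[R]_p :=
  Exp (fun X => (Y X - Exp Y) *m (Y X - Exp Y)^T).

End Affiliation.

Definition maxnorm (R : realType) (p q : nat) (A : 'M[R]_(p, q)) : R :=
  \big[Num.max/0]_(i < p) \big[Num.max/0]_(j < q) `|A i j|.

(* Main.v *)
Require Import Defs.
From HB Require Import structures.
From mathcomp Require Import all_boot all_order all_algebra.
From mathcomp Require Import reals exp sequences.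
From mathcomp Require Import ring lra.
Import Order.TTheory GRing.Theory Num.Theory.
Set Implicit Arguments. Unset Strict Implicit. Unset Printing Implicit Defensive.
Local Open Scope ring_scope.


Lemma sum_mx_prod (R : comNzRingType) m n (F : 'I_m -> 'I_n -> bool -> R) :
  \sum_(X : 'M[bool]_(m, n)) \prod_i \prod_j F i j (X i j)
  = \prod_i \prod_j (F i j true + F i j false).
Proof.
have -> : \prod_i \prod_j (F i j true + F i j false)
   = \prod_(p : 'I_m * 'I_n) \sum_(b : bool) F p.1 p.2 b.
  by rewrite pair_big /=; apply: eq_bigr => p _; rewrite big_bool.
rewrite (bigA_distr_bigA (fun (p : _ * _) (b : bool) => F p.1 p.2 b)) /=.
rewrite (reindex (fun f : {ffun 'I_m * 'I_n -> bool} => \matrix_(i, j) f (i, j))) /=.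
  apply: eq_bigr => f _; rewrite pair_big /=; apply: eq_bigr => [[i j]] _.
  by rewrite mxE.
exists (fun X : 'M[bool]_(m, n) => [ffun p : 'I_m * 'I_n => X p.1 p.2]).
  by move=> f _; apply/ffunP => [[i j]]; rewrite ffunE mxE.
by move=> X _; apply/matrixP => i j; rewrite !mxE ffunE.
Qed.

Lemma Eprod (R : realType) m n (th : 'cV[R]_(m + n.-1)) (h : 'I_m -> 'I_n -> bool -> R) :
  \sum_(X : 'M[bool]_(m, n)) probX th X * \prod_(i < m) \prod_(j < n) h i j (X i j)
  = \prod_(i < m) \prod_(j < n) (pN th i j * h i j true + (1 - pN th i j) * h i j false).
Proof.
pose F := fun (i : 'I_m) (j : 'I_n) (b : bool) => (if b then pN th i j else 1 - pN th i j) * h i j b.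
have -> : \prod_(i < m) \prod_(j < n) (pN th i j * h i j true + (1 - pN th i j) * h i j false)
   = \prod_(i < m) \prod_(j < n) (F i j true + F i j false) by [].
rewrite -sum_mx_prod; apply: eq_bigr => X _; rewrite /probX -big_split /=.
by apply: eq_bigr => i _; rewrite -big_split.
Qed.

Lemma prod_single (R : comNzRingType) m n (i0 : 'I_m) (j0 : 'I_n) (z : R) :
  \prod_(i < m) \prod_(j < n) (if (i == i0) && (j == j0) then z else 1) = z.
Proof.
rewrite (bigD1 i0) //= (bigD1 j0) //= !eqxx /= big1 ?mulr1; last first.
  by move=> j /negbTE ->.
rewrite big1 ?mulr1 // => i /negbTE ->; exact: big1.
Qed.

Lemma prod_zero_unused (R : comNzRingType) m n (i0 : 'I_m) (j0 : 'I_n) (F : 'I_m -> 'I_n -> R) :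
  F i0 j0 = 0 -> \prod_(i < m) \prod_(j < n) F i j = 0.
Proof. by move=> H; rewrite (bigD1 i0) //= (bigD1 j0) //= H !mul0r. Qed.

Definition dX (R : realType) m n (th : 'cV[R]_(m + n.-1)) (X : 'M[bool]_(m, n)) (i : 'I_m) (j : 'I_n) : R :=
  (X i j)%:R - pN th i j.

Lemma pN_01 (R : realType) m n (th : 'cV[R]_(m + n.-1)) i j :
  pN th i j * (1 - pN th i j) = uN th i j.
Proof.
rewrite /pN /uN; set e := expR _.
have he : 1 + e != 0 by rewrite gt_eqF // ltr_pwDr ?expR_gt0.
by field.
Qed.

Lemma E0 (R : realType) m n (th : 'cV[R]_(m + n.-1)) :
  \sum_(X : 'M[bool]_(m, n)) probX th X = 1.
Proof.
transitivity (\sum_(X : 'M[bool]_(m, n)) probX th X * \prod_(i < m) \prod_(j < n) (fun _ : bool => (1:R)) (X i j)).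
  by apply: eq_bigr => X _; rewrite !big1 ?mulr1.
rewrite (Eprod th (fun _ _ _ => 1)); apply: big1 => i _; apply: big1 => j _.
by rewrite !mulr1 addrC subrK.
Qed.

Lemma E1 (R : realType) m n (th : 'cV[R]_(m + n.-1)) i0 j0 :
  \sum_(X : 'M[bool]_(m, n)) probX th X * dX th X i0 j0 = 0.
Proof.
transitivity (\sum_(X : 'M[bool]_(m, n)) probX th X * \prod_(i < m) \prod_(j < n)
   (fun b : bool => if (i == i0) && (j == j0) then b%:R - pN th i j else 1) (X i j)).
  apply: eq_bigr => X _; congr (_ * _).
  rewrite -(prod_single i0 j0 (dX th X i0 j0)); apply: eq_bigr => i _; apply: eq_bigr => j _.
  by case: eqP => [->|]; case: eqP => [->|].
rewrite (Eprod th (fun i j (b : bool) => if (i == i0) && (j == j0) then b%:R - pN th i j else 1)).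
rewrite (bigD1 i0) //= (bigD1 j0) //= !eqxx /=.
rewrite [X in X * _ * _](_ : _ = 0) ?mul0r //.
by ring.
Qed.

Lemma E2 (R : realType) m n (th : 'cV[R]_(m + n.-1)) i0 j0 i1 j1 :
  \sum_(X : 'M[bool]_(m, n)) probX th X * (dX th X i0 j0 * dX th X i1 j1)
  = if (i0 == i1) && (j0 == j1) then uN th i0 j0 else 0.
Proof.
transitivity (\sum_(X : 'M[bool]_(m, n)) probX th X * \prod_(i < m) \prod_(j < n)
   (fun b : bool => (if (i == i0) && (j == j0) then b%:R - pN th i j else 1)
       * (if (i == i1) && (j == j1) then b%:R - pN th i j else 1)) (X i j)).
  apply: eq_bigr => X _; congr (_ * _).
  rewrite -(prod_single i0 j0 (dX th X i0 j0)) -(prod_single i1 j1 (dX th X i1 j1)).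
  rewrite -big_split /=; apply: eq_bigr => i _; rewrite -big_split /=; apply: eq_bigr => j _.
  by congr (_ * _); case: eqP => [->|]; case: eqP => [->|].
rewrite (Eprod th (fun i j (b : bool) => (if (i == i0) && (j == j0) then b%:R - pN th i j else 1)
       * (if (i == i1) && (j == j1) then b%:R - pN th i j else 1))).
case: ifP => [/andP [/eqP e1 /eqP e2]|hne].
  subst i1 j1; rewrite -(prod_single i0 j0 (uN th i0 j0)).
  apply: eq_bigr => i _; apply: eq_bigr => j _.
  case: ifP => [/andP[/eqP -> /eqP ->]|_]; last by rewrite !mulr1 addrC subrK.
  by rewrite -pN_01 /=; ring.
rewrite (bigD1 i0) //= (bigD1 j0) //= !eqxx /= hne.
rewrite [X in X * _ * _](_ : _ = 0) ?mul0r //.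
by rewrite /= !mulr1; ring.
Qed.


Lemma ExpE (R : realType) m n (th : 'cV[R]_(m + n.-1)) p q (F : 'M[bool]_(m, n) -> 'M[R]_(p, q)) k l :
  Exp th F k l = \sum_X probX th X * F X k l.
Proof. by rewrite /Exp summxE; apply: eq_bigr => X _; rewrite mxE. Qed.

Lemma ExpMl (R : realType) m n (th : 'cV[R]_(m + n.-1)) p q r (A : 'M[R]_(p, q)) (F : 'M[bool]_(m, n) -> 'M[R]_(q, r)) :
  Exp th (fun X => A *m F X) = A *m Exp th F.
Proof. by rewrite /Exp mulmx_sumr; apply: eq_bigr => X _; rewrite scalemxAr. Qed.

Lemma ExpMr (R : realType) m n (th : 'cV[R]_(m + n.-1)) p q r (B : 'M[R]_(q, r)) (F : 'M[bool]_(m, n) -> 'M[R]_(p, q)) :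
  Exp th (fun X => F X *m B) = Exp th F *m B.
Proof. by rewrite /Exp mulmx_suml; apply: eq_bigr => X _; rewrite scalemxAl. Qed.

Lemma ExpB (R : realType) m n (th : 'cV[R]_(m + n.-1)) p q (F : 'M[bool]_(m, n) -> 'M[R]_(p, q)) C :
  Exp th (fun X => F X - C) = Exp th F - C.
Proof.
apply/matrixP => k l; rewrite !mxE !ExpE.
under eq_bigr do rewrite !mxE mulrBr.
by rewrite sumrB -mulr_suml E0 mul1r.
Qed.

Definition cc m n (k : 'I_(m + n.-1)) (p : 'I_m * 'I_n) : nat :=
  match split k with
  | inl i => (p.1 == i)
  | inr j => (p.2 == widen_ord (leq_pred n) j)
  end.

Lemma sum_cc (R : realType) m n (k : 'I_(m + n.-1)) (f : 'I_m * 'I_n -> R) :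
  \sum_(p : 'I_m * 'I_n) (cc k p)%:R * f p =
  match split k with
  | inl i => \sum_(j < n) f (i, j)
  | inr j => \sum_(i < m) f (i, widen_ord (leq_pred n) j)
  end.
Proof.
transitivity (\sum_(a < m) \sum_(b < n) (cc k (a, b))%:R * f (a, b)).
  by rewrite pair_big; apply: eq_bigr => [[a b]].
rewrite /cc /=.
case: (split k) => [i|j].
  rewrite (bigD1 i) //= [X in _ + X]big1 ?addr0; last first.
    by move=> a /negbTE ->; apply: big1 => b _; rewrite mul0r.
  by apply: eq_bigr => b _; rewrite eqxx mul1r.
apply: eq_bigr => a _; rewrite (bigD1 (widen_ord (leq_pred n) j)) //= eqxx mul1r [X in _ + X]big1 ?addr0 //.
by move=> b /negbTE ->; rewrite mul0r.
Qed.

Lemma gvecE (R : realType) m n (X : 'M[bool]_(m, n)) k :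
  gvec R X k 0 = \sum_(p : 'I_m * 'I_n) (cc k p)%:R * (X p.1 p.2)%:R.
Proof. by rewrite (sum_cc k (fun p => (X p.1 p.2)%:R)) mxE. Qed.

Lemma Ex (R : realType) m n (th : 'cV[R]_(m + n.-1)) a b :
  \sum_(X : 'M[bool]_(m, n)) probX th X * (X a b)%:R = pN th a b.
Proof.
have := E1 th a b; rewrite /dX.
under eq_bigr do rewrite mulrBr.
by rewrite sumrB -mulr_suml E0 mul1r => /eqP; rewrite subr_eq0 => /eqP.
Qed.

Lemma GE (R : realType) m n (th : 'cV[R]_(m + n.-1)) X k :
  (gvec R X - Exp th (@gvec R m n)) k 0 = \sum_(p : 'I_m * 'I_n) (cc k p)%:R * dX th X p.1 p.2.
Proof.
rewrite mxE gvecE [X in _ + X]mxE ExpE.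
under [X in _ - X = _]eq_bigr do rewrite gvecE mulr_sumr.
rewrite exchange_big /= -sumrB; apply: eq_bigr => p _.
under eq_bigr do rewrite mulrCA.
by rewrite -mulr_sumr Ex /dX mulrBr.
Qed.

Lemma CovG (R : realType) m n (th : 'cV[R]_(m + n.-1)) :
  let G := fun X => gvec R X - Exp th (@gvec R m n) in
  Exp th (fun X => G X *m (G X)^T) = fisherV th.
Proof.
move=> G; apply/matrixP => k l; rewrite ExpE.
have hG : forall X k, G X k ord0 = \sum_(p : 'I_m * 'I_n) (cc k p)%:R * dX th X p.1 p.2.
  by move=> X k'; exact: GE.
under eq_bigr do rewrite mxE big_ord1 [(G _)^T _ _]mxE !hG mulr_suml.
under eq_bigr do under eq_bigr do rewrite mulr_sumr.
under eq_bigr do rewrite mulr_sumr.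
under eq_bigr do under eq_bigr do rewrite mulr_sumr.
rewrite exchange_big /=.
transitivity (\sum_(p : 'I_m * 'I_n) (cc k p)%:R * ((cc l p)%:R * uN th p.1 p.2)).
  apply: eq_bigr => p _; rewrite exchange_big /= (bigD1 p) //= [X in _ + X]big1 ?addr0.
    have := E2 th p.1 p.2 p.1 p.2; rewrite !eqxx /= => <-.
    by rewrite mulr_sumr mulr_sumr; apply: eq_bigr => X _; ring.
  move=> q hq.
  have -> : \sum_X probX th X * ((cc k p)%:R * dX th X p.1 p.2 * ((cc l q)%:R * dX th X q.1 q.2))
     = (cc k p)%:R * (cc l q)%:R * \sum_X probX th X * (dX th X p.1 p.2 * dX th X q.1 q.2).
    by rewrite mulr_sumr; apply: eq_bigr => X _; ring.
  rewrite E2; case: ifP; rewrite ?mulr0 // => /andP [/eqP h1 /eqP h2].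
  by move: hq; rewrite [q]surjective_pairing -h1 -h2 -surjective_pairing eqxx.
rewrite (sum_cc k (fun p => (cc l p)%:R * uN th p.1 p.2)) /fisherV mxE /cc.
case: (split k) => [i|j]; case: (split l) => [i'|j'] /=.
- case: eqP => [->|_]; last by apply: big1 => j _; rewrite mul0r.
  by apply: eq_bigr => j _; rewrite mul1r.
- rewrite (bigD1 (widen_ord (leq_pred n) j')) //= eqxx mul1r [X in _ + X]big1 ?addr0 //.
  by move=> b /negbTE ->; rewrite mul0r.
- rewrite (bigD1 i') //= eqxx mul1r [X in _ + X]big1 ?addr0 //.
  by move=> b /negbTE ->; rewrite mul0r.
- rewrite -val_eqE /= val_eqE.
  case: eqP => [->|_]; last by apply: big1 => j0 _; rewrite mul0r.
  by apply: eq_bigr => i _; rewrite mul1r.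
Qed.


Lemma splitL m n (i : 'I_m) : split (lshift n i) = inl i.
Proof. exact: (unsplitK (inl i : 'I_m + 'I_n)). Qed.
Lemma splitR m n (i : 'I_n) : split (rshift m i) = inr i.
Proof. exact: (unsplitK (inr i : 'I_m + 'I_n)). Qed.

Lemma sum_if (R : realType) m (i : 'I_m) (F : 'I_m -> R) :
  \sum_(r < m) (if i == r then F r else 0) = F i.
Proof.
rewrite (bigD1 i) //= eqxx big1 ?addr0 // => r hr.
by rewrite eq_sym (negbTE hr).
Qed.

Lemma sum_delta (R : realType) m (i : 'I_m) (F c : 'I_m -> R) (d : R) :
  \sum_(r < m) ((i == r)%:R / c r + d) * F r = F i / c i + d * \sum_(r < m) F r.
Proof.
under eq_bigr do rewrite mulrDl.
rewrite big_split /= mulr_sumr; congr (_ + _).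
rewrite -(sum_if i (fun r => F r / c r)); apply: eq_bigr => r _.
by case: eqP => [<-|_]; rewrite ?mul1r ?mul0r // mulrC.
Qed.

Lemma uN_gt0 (R : realType) m n (th : 'cV[R]_(m + n.-1)) i j : 0 < uN th i j.
Proof. by rewrite /uN divr_gt0 ?expR_gt0 // exprn_gt0 // ltr_pwDr ?expR_gt0. Qed.

Definition ai (R : realType) m n (th : 'cV[R]_(m + n.+1.-1)) (i : nat) := \sum_(j < n.+1) uN th i j.
Definition bj (R : realType) m n (th : 'cV[R]_(m + n.+1.-1)) (j : nat) := \sum_(i < m) uN th i j.


Lemma ai_split (R : realType) m n (th : 'cV[R]_(m + n.+1.-1)) i :
  ai th i = \sum_(j < n) uN th i j + uN th i n.
Proof. by rewrite /ai big_ord_recr. Qed.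

Lemma ai_gt0 (R : realType) m n (th : 'cV[R]_(m + n.+1.-1)) i : 0 < ai th i.
Proof. by rewrite ai_split ltr_wpDl ?uN_gt0 // sumr_ge0 // => j _; rewrite ltW ?uN_gt0. Qed.

Lemma bj_gt0 (R : realType) m n (th : 'cV[R]_(m + n.+1.-1)) j : (0 < m)%N -> 0 < bj th j.
Proof.
case: m th => // m th _; rewrite /bj big_ord_recl ltr_pwDl ?uN_gt0 //.
by rewrite sumr_ge0 // => i _; rewrite ltW ?uN_gt0.
Qed.

Lemma Vll (R : realType) m n (th : 'cV[R]_(m + n.+1.-1)) (i i' : 'I_m) :
  fisherV th (lshift _ i) (lshift _ i') = if i == i' then ai th i else 0.
Proof. by rewrite mxE !splitL. Qed.
Lemma Vlr (R : realType) m n (th : 'cV[R]_(m + n.+1.-1)) (i : 'I_m) (j : 'I_n) :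
  fisherV th (lshift _ i) (rshift _ j) = uN th i j.
Proof. by rewrite mxE splitL splitR. Qed.
Lemma Vrl (R : realType) m n (th : 'cV[R]_(m + n.+1.-1)) (i : 'I_m) (j : 'I_n) :
  fisherV th (rshift _ j) (lshift _ i) = uN th i j.
Proof. by rewrite mxE splitL splitR. Qed.
Lemma Vrr (R : realType) m n (th : 'cV[R]_(m + n.+1.-1)) (j j' : 'I_n) :
  fisherV th (rshift _ j) (rshift _ j') = if j == j' then bj th j else 0.
Proof. by rewrite mxE !splitR. Qed.

Lemma Sll (R : realType) m n (th : 'cV[R]_(m + n.+1.-1)) (i i' : 'I_m) :
  matS th (lshift _ i) (lshift _ i') = (i == i')%:R / ai th i + 1 / bj th n.
Proof. by rewrite mxE !splitL Vll eqxx. Qed.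
Lemma Slr (R : realType) m n (th : 'cV[R]_(m + n.+1.-1)) (i : 'I_m) (j : 'I_n) :
  matS th (lshift _ i) (rshift _ j) = - (1 / bj th n).
Proof. by rewrite mxE splitL splitR. Qed.
Lemma Srl (R : realType) m n (th : 'cV[R]_(m + n.+1.-1)) (i : 'I_m) (j : 'I_n) :
  matS th (rshift _ j) (lshift _ i) = - (1 / bj th n).
Proof. by rewrite mxE splitL splitR. Qed.
Lemma Srr (R : realType) m n (th : 'cV[R]_(m + n.+1.-1)) (j j' : 'I_n) :
  matS th (rshift _ j) (rshift _ j') = (j == j')%:R / bj th j + 1 / bj th n.
Proof. by rewrite mxE !splitR Vrr eqxx. Qed.

Lemma mulE (R : realType) p q r (A : 'M[R]_(p, q)) (B : 'M[R]_(q, r)) k l :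
  (A *m B) k l = \sum_s A k s * B s l.
Proof. by rewrite mxE. Qed.

Lemma subE (R : realType) p (A : 'M[R]_p) k l :
  (A - 1%:M) k l = A k l - (k == l)%:R.
Proof. by rewrite !mxE. Qed.

Lemma ifmul (R : realType) (b : bool) (x y : R) : (if b then x else 0) * y = if b then x * y else 0.
Proof. by case: b; rewrite ?mul0r. Qed.

Lemma mulif (R : realType) (b : bool) (x y : R) : x * (if b then y else 0) = if b then x * y else 0.
Proof. by case: b; rewrite ?mulr0. Qed.

Definition Wm (R : realType) m n (th : 'cV[R]_(m + n.+1.-1)) := fisherV th *m matS th - 1%:M.

Lemma Wll (R : realType) m n (th : 'cV[R]_(m + n.+1.-1)) (hm : (0 < m)%N) (i i' : 'I_m) :
  Wm th (lshift _ i) (lshift _ i') = uN th i n / bj th n.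
Proof.
rewrite /Wm subE mulE big_split_ord /=.
under eq_bigr do rewrite Vll Sll ifmul.
under [X in _ + X - _]eq_bigr do rewrite Vlr Srl.
rewrite sum_if -mulr_suml eq_shift.
have ha := ai_gt0 th i; have hb := bj_gt0 th n hm.
move: ha hb; rewrite ai_split => ha hb.
case: (i == i'); rewrite /=; field; rewrite ?gt_eqF //.
Qed.

Lemma Wlr (R : realType) m n (th : 'cV[R]_(m + n.+1.-1)) (hm : (0 < m)%N) (i : 'I_m) (j : 'I_n) :
  Wm th (lshift _ i) (rshift _ j) = uN th i j / bj th j - uN th i n / bj th n.
Proof.
rewrite /Wm subE mulE big_split_ord /=.
under eq_bigr do rewrite Vll Slr ifmul.
under [X in _ + X - _]eq_bigr do rewrite Vlr Srr mulrC eq_sym.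
rewrite sum_if (sum_delta j (fun r : 'I_n => uN th i r) (fun r : 'I_n => bj th r)) eq_lrshift.
have ha := ai_gt0 th i; have hb := bj_gt0 th n hm; have hbj := bj_gt0 th j hm.
move: ha; rewrite ai_split => ha.
by rewrite /=; field; rewrite ?gt_eqF //; apply/andP; split; rewrite gt_eqF.
Qed.

Lemma Wrl (R : realType) m n (th : 'cV[R]_(m + n.+1.-1)) (hm : (0 < m)%N) (i : 'I_m) (j : 'I_n) :
  Wm th (rshift _ j) (lshift _ i) = uN th i j / ai th i.
Proof.
rewrite /Wm subE mulE big_split_ord /=.
under eq_bigr do rewrite Vrl Sll mulrC eq_sym.
under [X in _ + X - _]eq_bigr do rewrite Vrr Srl ifmul.
rewrite sum_if (sum_delta i (fun r : 'I_m => uN th r j) (fun r : 'I_m => ai th r)).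
have -> : (rshift m j == lshift n.+1.-1 i) = false by rewrite eq_sym eq_lrshift.
have ha := ai_gt0 th i; have hb := bj_gt0 th n hm; have hbj := bj_gt0 th j hm.
rewrite -[\sum_(r < m) uN th r j]/(bj th j).
by rewrite /=; field; rewrite ?gt_eqF //; apply/andP; split; rewrite gt_eqF.
Qed.

Lemma Wrr (R : realType) m n (th : 'cV[R]_(m + n.+1.-1)) (hm : (0 < m)%N) (j j' : 'I_n) :
  Wm th (rshift _ j) (rshift _ j') = 0.
Proof.
rewrite /Wm subE mulE big_split_ord /=.
under eq_bigr do rewrite Vrl Slr.
under [X in _ + X - _]eq_bigr do rewrite Vrr Srr ifmul.
rewrite sum_if -mulr_suml eq_shift.
rewrite -[\sum_(r < m) uN th r j]/(bj th j).
have hb := bj_gt0 th n hm; have hbj := bj_gt0 th j hm.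
by case: (j == j'); rewrite /=; field; rewrite ?gt_eqF.
Qed.

Definition Em (R : realType) m n (th : 'cV[R]_(m + n.+1.-1)) := matS th *m Wm th.

Lemma Ell (R : realType) m n (th : 'cV[R]_(m + n.+1.-1)) (hm : (0 < m)%N) (i i' : 'I_m) :
  Em th (lshift _ i) (lshift _ i') = uN th i n / (ai th i * bj th n) + uN th i' n / (ai th i' * bj th n).
Proof.
rewrite /Em mulE big_split_ord /=.
under eq_bigr do rewrite Sll Wll //.
under [X in _ + X]eq_bigr do rewrite Slr Wrl //.
rewrite (sum_delta i (fun r : 'I_m => uN th r n / bj th n) (fun _ => ai th i)).
rewrite -mulr_sumr -mulr_suml -mulr_suml -[\sum_(r < m) uN th r n]/(bj th n).
have -> : \sum_(j < n) uN th i' j = ai th i' - uN th i' n by rewrite ai_split addrK.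
have ha := ai_gt0 th i; have ha' := ai_gt0 th i'; have hb := bj_gt0 th n hm.
by field; rewrite ?gt_eqF //; apply/and3P; split; rewrite gt_eqF.
Qed.

Lemma Elr (R : realType) m n (th : 'cV[R]_(m + n.+1.-1)) (hm : (0 < m)%N) (i : 'I_m) (j : 'I_n) :
  Em th (lshift _ i) (rshift _ j) = (uN th i j / bj th j - uN th i n / bj th n) / ai th i.
Proof.
rewrite /Em mulE big_split_ord /=.
under eq_bigr do rewrite Sll Wlr //.
under [X in _ + X]eq_bigr do rewrite Slr Wrr // mulr0.
rewrite big1_eq addr0.
rewrite (sum_delta i (fun r : 'I_m => uN th r j / bj th j - uN th r n / bj th n) (fun _ => ai th i)).
rewrite sumrB -!mulr_suml -[\sum_(r < m) uN th r n]/(bj th n) -[\sum_(r < m) uN th r j]/(bj th j).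
have ha := ai_gt0 th i; have hbj := bj_gt0 th j hm; have hb := bj_gt0 th n hm.
by field; rewrite ?gt_eqF //; apply/and3P; split; rewrite gt_eqF.
Qed.

Lemma Erl (R : realType) m n (th : 'cV[R]_(m + n.+1.-1)) (hm : (0 < m)%N) (i : 'I_m) (j : 'I_n) :
  Em th (rshift _ j) (lshift _ i) = uN th i j / (ai th i * bj th j) - uN th i n / (ai th i * bj th n).
Proof.
rewrite /Em mulE big_split_ord /=.
under eq_bigr do rewrite Srl Wll //.
under [X in _ + X]eq_bigr do rewrite Srr Wrl //.
rewrite (sum_delta j (fun r : 'I_n => uN th i r / ai th i) (fun _ => bj th j)).
rewrite -mulr_sumr -!mulr_suml -[\sum_(r < m) uN th r n]/(bj th n).
have -> : \sum_(r < n) uN th i r = ai th i - uN th i n by rewrite ai_split addrK.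
have ha := ai_gt0 th i; have hbj := bj_gt0 th j hm; have hb := bj_gt0 th n hm.
by field; rewrite ?gt_eqF //; apply/and3P; split; rewrite gt_eqF.
Qed.

Lemma Err (R : realType) m n (th : 'cV[R]_(m + n.+1.-1)) (hm : (0 < m)%N) (j j' : 'I_n) :
  Em th (rshift _ j) (rshift _ j') = 0.
Proof.
rewrite /Em mulE big_split_ord /=.
under eq_bigr do rewrite Srl Wlr //.
under [X in _ + X]eq_bigr do rewrite Srr Wrr // mulr0.
rewrite big1_eq addr0 -mulr_sumr sumrB -!mulr_suml.
rewrite -[\sum_(r < m) uN th r n]/(bj th n) -[\sum_(r < m) uN th r j']/(bj th j').
have hbj := bj_gt0 th j' hm; have hb := bj_gt0 th n hm.
by field; rewrite ?gt_eqF //; apply/andP; split; rewrite gt_eqF.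
Qed.


Lemma le_maxnorm (R : realType) p q (A : 'M[R]_(p, q)) i j : `|A i j| <= maxnorm A.
Proof.
apply: le_trans (le_bigmax 0 (fun i => \big[Num.max/0]_(j < q) `|A i j|) i).
exact: (le_bigmax 0 (fun j => `|A i j|) j).
Qed.

Lemma maxnorm_ge0 (R : realType) p q (A : 'M[R]_(p, q)) : 0 <= maxnorm A.
Proof. exact: bigmax_ge_id. Qed.

Lemma maxnorm_le (R : realType) p q (A : 'M[R]_(p, q)) c :
  0 <= c -> (forall i j, `|A i j| <= c) -> maxnorm A <= c.
Proof.
move=> c0 H; apply: bigmax_le => // i _; apply: bigmax_le => // j _; exact: H.
Qed.

Lemma thetaN_le (R : realType) m n (th : 'cV[R]_(m + n.-1)) k : `|thetaN th k| <= maxnorm th.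
Proof.
rewrite /thetaN; case: insubP => [k' _ _|_]; first exact: le_maxnorm.
by rewrite normr0 maxnorm_ge0.
Qed.

Lemma ab_le (R : realType) m n (th : 'cV[R]_(m + n.-1)) i j :
  `|alphaN th i + betaN th j| <= 2 * maxnorm th.
Proof.
apply: le_trans (ler_normD _ _) _; rewrite mulr2n mulrDl mul1r; apply: lerD.
  exact: thetaN_le.
rewrite /betaN; case: ifP => _; first exact: thetaN_le.
by rewrite normr0 maxnorm_ge0.
Qed.

Lemma u_lower (R : realType) (x c : R) : `|x| <= c ->
  expR c / (1 + expR c) ^+ 2 <= expR x / (1 + expR x) ^+ 2.
Proof.
move=> hx; have [h1 h2] : - c <= x /\ x <= c by move: hx; rewrite ler_norml => /andP.
have hy := expR_gt0 x; have hE := expR_gt0 c.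
have le1 : expR x <= expR c by rewrite ler_expR.
have le2 : 1 <= expR c * expR x.
  rewrite -expRD; apply: le_trans (expR_ge1Dx _); lra.
rewrite -subr_ge0.
set y := expR x in hy le1 le2 *; set E := expR c in hE le1 le2 *.
have -> : y / (1 + y) ^+ 2 - E / (1 + E) ^+ 2 = ((E - y) * (E * y - 1)) / ((1 + y) ^+ 2 * (1 + E) ^+ 2).
  by field; apply/andP; split; rewrite gt_eqF // ?ltr_wpDr ?ltW.
apply: divr_ge0; last by apply: mulr_ge0; apply: exprn_ge0; lra.
apply: mulr_ge0; lra.
Qed.

Lemma u_upper (R : realType) (x : R) : expR x / (1 + expR x) ^+ 2 <= 1 / 4.
Proof.
have hy := expR_gt0 x.
rewrite -subr_ge0; set y := expR x in hy *.
have -> : 1 / 4 - y / (1 + y) ^+ 2 = (1 - y) ^+ 2 / (4 * (1 + y) ^+ 2).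
  by field; rewrite gt_eqF // ltr_wpDr ?ltW.
by apply: divr_ge0; [exact: sqr_ge0 | apply: mulr_ge0; [lra | exact: sqr_ge0]].
Qed.

Definition qq (R : realType) m n (th : 'cV[R]_(m + n.-1)) :=
  expR (2 * maxnorm th) / (1 + expR (2 * maxnorm th)) ^+ 2.

Lemma qq_gt0 (R : realType) m n (th : 'cV[R]_(m + n.-1)) : 0 < qq th.
Proof. by rewrite /qq divr_gt0 ?expR_gt0 // exprn_gt0 // ltr_wpDr ?expR_ge0. Qed.

Lemma uN_ge (R : realType) m n (th : 'cV[R]_(m + n.-1)) i j : qq th <= uN th i j.
Proof. exact: u_lower (ab_le th i j). Qed.

Lemma uN_le (R : realType) m n (th : 'cV[R]_(m + n.-1)) i j : uN th i j <= 1 / 4.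
Proof. exact: u_upper. Qed.

Lemma ai_ge (R : realType) m n (th : 'cV[R]_(m + n.+1.-1)) i : n.+1%:R * qq th <= ai th i.
Proof.
have : \sum_(j < n.+1) qq th <= \sum_(j < n.+1) uN th i j by apply: ler_sum => j _; exact: uN_ge.
by rewrite sumr_const card_ord mulr_natl.
Qed.

Lemma bj_ge (R : realType) m n (th : 'cV[R]_(m + n.+1.-1)) j : m%:R * qq th <= bj th j.
Proof.
have : \sum_(i < m) qq th <= \sum_(i < m) uN th i j by apply: ler_sum => i _; exact: uN_ge.
by rewrite sumr_const card_ord mulr_natl.
Qed.

Definition KK (R : realType) m n (th : 'cV[R]_(m + n.+1.-1)) :=
  (1 / 4) / ((n.+1%:R * qq th) * (m%:R * qq th)).

Lemma frac_bound (R : realType) m n (th : 'cV[R]_(m + n.+1.-1)) (hm : (0 < m)%N) i i' j j' :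
  0 <= uN th i j / (ai th i' * bj th j') <= KK th.
Proof.
have hq := qq_gt0 th.
have hA : 0 < n.+1%:R * qq th by rewrite mulr_gt0 ?ltr0n.
have hB : 0 < m%:R * qq th by rewrite mulr_gt0 ?ltr0n.
have ha := ai_ge th i'; have hb := bj_ge th j'.
have hab : 0 < ai th i' * bj th j' by rewrite mulr_gt0 ?ai_gt0 ?bj_gt0.
apply/andP; split; first by rewrite divr_ge0 ?ltW ?uN_gt0.
apply: ler_pM.
- exact: ltW (uN_gt0 _ _ _).
- by rewrite invr_ge0 ltW.
- exact: uN_le.
rewrite lef_pV2 ?posrE ?hab ?(mulr_gt0 hA hB) //.
by apply: ler_pM => //; apply: ltW.
Qed.

Lemma absdiff (R : realType) (x y K : R) : 0 <= x <= K -> 0 <= y <= K -> `|x - y| <= K.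
Proof. move=> /andP [? ?] /andP [? ?]; rewrite ler_norml; apply/andP; split; lra. Qed.

Lemma Em_bound (R : realType) m n (th : 'cV[R]_(m + n.+1.-1)) (hm : (0 < m)%N) k l :
  `|Em th k l| <= 2 * KK th.
Proof.
have hK : 0 <= KK th.
  by have /andP [h1 h2] := frac_bound th hm 0%N 0%N 0%N 0%N; apply: le_trans h2.
case: (split_ordP k) => i -> {k}; case: (split_ordP l) => j -> {l}.
- rewrite Ell //.
  have /andP [h1 h2] := frac_bound th hm i i n n.
  have /andP [h3 h4] := frac_bound th hm j j n n.
  rewrite ger0_norm; last by apply: addr_ge0.
  by rewrite mulr2n mulrDl mul1r lerD.
- rewrite Elr //.
  have -> : (uN th i j / bj th j - uN th i n / bj th n) / ai th i
     = uN th i j / (ai th i * bj th j) - uN th i n / (ai th i * bj th n).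
    have ha := ai_gt0 th i; have hbj := bj_gt0 th j hm; have hb := bj_gt0 th n hm.
    by field; apply/and3P; split; rewrite gt_eqF.
  apply: le_trans (_ : KK th <= _); last by rewrite mulr2n mulrDl mul1r lerDl.
  by apply: absdiff; apply: frac_bound.
- rewrite Erl //.
  apply: le_trans (_ : KK th <= _); last by rewrite mulr2n mulrDl mul1r lerDl.
  by apply: absdiff; apply: frac_bound.
- by rewrite Err // normr0 mulr_ge0.
Qed.


Lemma uN_ge0 (R : realType) m n (th : 'cV[R]_(m + n.-1)) i j : 0 <= uN th i j.
Proof. exact: ltW (uN_gt0 _ _ _). Qed.

Lemma V_unit (R : realType) m n (th : 'cV[R]_(m + n.+1.-1)) (hm : (0 < m)%N) :
  fisherV th \in unitmx.
Proof.
rewrite unitmxE unitfE; apply/negP => /det0P [v vn0 hv].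
pose x := fun i : 'I_m => (v 0 (lshift _ i) : R).
pose y := fun j : 'I_n => (v 0 (rshift _ j) : R).
have hA : forall i' : 'I_m, x i' * ai th i' + \sum_(j < n) y j * uN th i' j = 0.
  move=> i'; have := congr1 (fun M : 'M[R]_(1, m + n.+1.-1) => M 0 (lshift _ i')) hv; rewrite mulE big_split_ord /= mxE.
  under eq_bigr do rewrite Vll mulif eq_sym.
  under [X in _ + X]eq_bigr do rewrite Vrl.
  by rewrite (sum_if i' (fun r => v 0 (lshift _ r) * ai th r)).
have hB : forall j' : 'I_n, \sum_(i < m) x i * uN th i j' + y j' * bj th j' = 0.
  move=> j'; have := congr1 (fun M : 'M[R]_(1, m + n.+1.-1) => M 0 (rshift _ j')) hv; rewrite mulE big_split_ord /= mxE.
  under eq_bigr do rewrite Vlr.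
  under [X in _ + X]eq_bigr do rewrite Vrr mulif eq_sym.
  by rewrite (sum_if j' (fun r => v 0 (rshift _ r) * bj th r)).
have hQ : \sum_(i < m) (x i ^+ 2 * uN th i n + \sum_(j < n) uN th i j * (x i + y j) ^+ 2) = 0.
  transitivity (\sum_(i < m) x i * (x i * ai th i + \sum_(j < n) y j * uN th i j)
     + \sum_(j < n) y j * (\sum_(i < m) x i * uN th i j + y j * bj th j)); last first.
    by rewrite big1 ?add0r; [apply: big1 => j _; rewrite hB mulr0 | move=> i _; rewrite hA mulr0].
  have -> : \sum_(j < n) y j * (\sum_(i < m) x i * uN th i j + y j * bj th j)
     = \sum_(i < m) \sum_(j < n) (y j * (x i * uN th i j) + y j * (y j * uN th i j)).
    rewrite exchange_big; apply: eq_bigr => j _ /=.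
    by rewrite /bj mulrDr !mulr_sumr -big_split.
  rewrite -big_split; apply: eq_bigr => i _ /=.
  rewrite ai_split !mulrDr !mulr_sumr.
  transitivity (x i * (x i * uN th i n) + \sum_(j < n) (x i * (x i * uN th i j)
     + x i * (y j * uN th i j) + (y j * (x i * uN th i j) + y j * (y j * uN th i j)))).
    by congr (_ + _); [ring | apply: eq_bigr => j _; ring].
  by rewrite !big_split /=; ring.
have hpos : forall i : 'I_m, 0 <= x i ^+ 2 * uN th i n + \sum_(j < n) uN th i j * (x i + y j) ^+ 2.
  move=> i; apply: addr_ge0; first by rewrite mulr_ge0 ?sqr_ge0 ?uN_ge0.
  by apply: sumr_ge0 => j _; rewrite mulr_ge0 ?sqr_ge0 ?uN_ge0.
have /psumr_eq0P H := hQ.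
have hx : forall i, x i = 0.
  move=> i; have /eqP := H (fun i _ => hpos i) i isT.
  rewrite paddr_eq0; last by apply: sumr_ge0 => j _; apply: mulr_ge0; [exact: uN_ge0 | exact: sqr_ge0].
    case/andP; rewrite mulf_eq0 (gt_eqF (uN_gt0 _ _ _)) orbF sqrf_eq0 => /eqP.
    done.
  by apply: mulr_ge0; [exact: sqr_ge0 | exact: uN_ge0].
have hy : forall j, y j = 0.
  move=> j; pose i0 : 'I_m := Ordinal hm.
  have /eqP := H (fun i _ => hpos i) i0 isT.
  rewrite hx expr0n /= mul0r add0r => /eqP /psumr_eq0P => H2.
  have /eqP := H2 (fun j _ => mulr_ge0 (uN_ge0 th i0 j) (sqr_ge0 _)) j isT.
  by rewrite mulf_eq0 (gt_eqF (uN_gt0 _ _ _)) /= add0r sqrf_eq0 => /eqP.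
move/eqP: vn0; apply; apply/matrixP => a k; rewrite ord1 mxE.
case: (split_ordP k) => [i ->|j ->]; [exact: hx | exact: hy].
Qed.

Lemma VT (R : realType) m n (th : 'cV[R]_(m + n.+1.-1)) : (fisherV th)^T = fisherV th.
Proof.
apply/matrixP => k l; rewrite mxE.
case: (split_ordP k) => i ->; case: (split_ordP l) => j ->.
- by rewrite !Vll eq_sym; case: eqP => // ->.
- by rewrite Vlr Vrl.
- by rewrite Vlr Vrl.
- by rewrite !Vrr eq_sym; case: eqP => // ->.
Qed.

Lemma ST (R : realType) m n (th : 'cV[R]_(m + n.+1.-1)) : (matS th)^T = matS th.
Proof.
apply/matrixP => k l; rewrite mxE.
case: (split_ordP k) => i ->; case: (split_ordP l) => j ->.
- by rewrite !Sll eq_sym; case: eqP => [->|_] //; rewrite !mul0r.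
- by rewrite Slr Srl.
- by rewrite Slr Srl.
- by rewrite !Srr eq_sym; case: eqP => [->|_] //; rewrite !mul0r.
Qed.

Lemma Exp_ext (R : realType) m n (th : 'cV[R]_(m + n.-1)) p q (F G : 'M[bool]_(m, n) -> 'M[R]_(p, q)) :
  (forall X, F X = G X) -> Exp th F = Exp th G.
Proof. by move=> H; rewrite /Exp; apply: eq_bigr => X _; rewrite H. Qed.

Unset Implicit Arguments. Set Strict Implicit.

Theorem lemma6 (R : realType) (m n : nat) (theta : 'cV[R]_(m + n.-1))
  (hm : (1 <= m)%N) (hmn : (m <= n)%N) :
  let V := fisherV theta in
  let S := matS theta in
  let Rm := invmx V - S in
  let U := Cov theta (fun X => Rm *m (@gvec R m n X - Exp theta (@gvec R m n))) in
  let t := maxnorm theta in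
  maxnorm U <= maxnorm (invmx V - S)
    + 3 * (1 + expR (2 * t)) ^+ 4 / (4 * (m * n)%:R * expR (4 * t)).
Proof.
case: n theta hmn => [|n] theta hmn; first by move: (leq_trans hm hmn).
cbv zeta.
set V := fisherV theta; set S := matS theta; set Rm := invmx V - S.
set U := Cov theta _; set t := maxnorm theta.
have hVu : V \in unitmx := V_unit theta hm.
have hC : Exp theta (fun X => (gvec R X - Exp theta (gvec R (n:=n.+1))) *m (gvec R X - Exp theta (gvec R (n:=n.+1)))^T) = V := CovG theta.
have hU : U = Rm *m V *m Rm^T.
  rewrite /U /Cov ExpMl ExpB subrr mulmx0.
  transitivity (Exp theta (fun X => Rm *m ((gvec R X - Exp theta (gvec R (n:=n.+1))) *m (gvec R X - Exp theta (gvec R (n:=n.+1)))^T) *m Rm^T)).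
    by apply: Exp_ext => X; rewrite subr0 trmx_mul !mulmxA.
  by rewrite ExpMr ExpMl hC.
have hRT : Rm^T = Rm by rewrite /Rm linearB /= trmx_inv VT ST.
have hE : Rm *m V *m Rm = Rm + Em theta.
  rewrite /Rm /Em /Wm -/V -/S.
  rewrite mulmxBl mulVmx // mulmxBl mul1mx -[S *m V *m _]mulmxA mulmxBr mulmxV //.
  by rewrite -[1%:M - _]opprB mulmxN opprK.
have hK0 : 0 <= KK theta.
  by have /andP [h1 h2] := frac_bound theta hm 0%N 0%N 0%N 0%N; apply: le_trans h2.
have -> : 3 * (1 + expR (2 * t)) ^+ 4 / (4 * (m * n.+1)%:R * expR (4 * t)) = 3 * KK theta.
  rewrite /KK /qq -/t.
  have -> : expR (4 * t) = expR (2 * t) ^+ 2 by rewrite expr2 -expRD; congr expR; ring.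
  have hEp := expR_gt0 (2 * t).
  have hm0 : (m%:R : R) != 0 by rewrite pnatr_eq0 -lt0n.
  rewrite natrM; field.
  rewrite hm0 !gt_eqF ?ltr_wpDr ?expR_ge0 //; lra.
rewrite hU hRT hE; apply: maxnorm_le.
  by rewrite addr_ge0 ?maxnorm_ge0 // mulr_ge0.
move=> i j; rewrite mxE; apply: le_trans (ler_normD _ _) _.
apply: lerD; first exact: le_maxnorm.
apply: le_trans (Em_bound theta hm i j) _.
by rewrite ler_wpM2r // ler_nat.
Qed.
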